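(* Let $d\ge 1$ and $z\ge 2$ be integers. For $c=(c_{d+1},c_{d+2},\dots,c_{dz})\in\mathbb{Z}_2^{d(z-1)}$ with $s=\|c\|$, let $i_1<\dots<i_s$ be the indices with $c_{i}=1$, and set $w_0=0$, $w_t=\lfloor (i_t-1)/d\rfloor$ for $1\le t\le s$, and $w_{s+1}=z$. Let $V(z)=\{c\in\mathbb{Z}_2^{d(z-1)}: \max_{0\le t\le s}(w_{t+1}-w_t)\le\lceil (\log_2 z)^2\rceil\}$. Then $$|V(z)|\ge 2^{d(z-1)}\big(1-2z^{\,1-d\log_2 z}\big).$$
   Context: $\|c\|$ denotes the Hamming weight (number of coordinates equal to $1$). Note $1\le w_t\le z-1$ for $1\le t\le s$. *)

(* Defs.v *)
From mathcomp Require Import all_boot.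
From Stdlib Require Import Reals.
Set Implicit Arguments. Unset Strict Implicit. Unset Printing Implicit Defensive.

Definition Rceil (x : R) : Z := (- Int_part (- x))%Z.

Definition log2 (x : R) : R := (ln x / ln 2)%R.

(* A word c = (c_{d+1},...,c_{dz}) in Z_2^{d(z-1)} is a function
   'I_(d*(z-1)) -> bool; coordinate j (0-based) is the paper's c_{d+1+j}. *)
Definition word (d z : nat) := {ffun 'I_(d * (z - 1)) -> bool}.

(* w_1 < ... < w_s : w_t = floor((i_t - 1)/d) with i_t = d+1+j *)
Definition wseq (d z : nat) (c : word d z) : seq nat :=
  [seq (d + j) %/ d | j <- [seq val j | j <- enum 'I_(d * (z - 1)) & c j]].

Definition gaps (d z : nat) (c : word d z) : seq nat :=
  pairmap (fun x y => y - x) 0 (rcons (wseq c) z).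

Definition maxgap (d z : nat) (c : word d z) : nat := \max_(g <- gaps c) g.

Definition Vset (d z : nat) : {set word d z} :=
  [set c : word d z | (Z.of_nat (maxgap c) <=? Rceil (log2 (INR z) ^ 2)%R)%Z].

(* Main.v *)
Require Import Defs.
From mathcomp Require Import all_boot zify.
Set Implicit Arguments. Unset Strict Implicit.

Lemma gap_lemma (t : seq nat) x0 g :
  sorted leq (x0 :: t) -> g \in pairmap (fun x y => y - x) x0 t ->
  exists u v, [/\ u \in x0 :: t, v \in x0 :: t, g = v - u &
     forall b, b \in x0 :: t -> b <= u \/ v <= b].
Proof.
elim: t x0 => [|y t IH] x0 //= /andP[hxy hp].
have hmin : forall b, b \in y :: t -> y <= b.
  move=> b; rewrite inE => /orP[/eqP->//|hb].
  by have := order_path_min leq_trans hp => /allP/(_ _ hb).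
rewrite in_cons => /orP[/eqP->|hg].
  exists x0, y; split; first by rewrite !inE eqxx.
      by rewrite !inE eqxx orbT.
    by [].
  move=> b; rewrite inE => /orP[/eqP->|hb]; first by left.
  by right; apply: hmin.
have [u [v [hu hv -> hb]]] := IH y hp hg.
exists u, v; split; first by rewrite inE hu orbT.
    by rewrite inE hv orbT.
  by [].
move=> b; rewrite inE => /orP[/eqP->|hb']; last exact: hb.
by left; apply: leq_trans hxy (hmin _ hu).
Qed.

Section S.
Variables (d z : nat).
Hypothesis hd : 0 < d.
Hypothesis hz : 0 < z.
Local Notation N := (d * (z - 1)).

Lemma wseq_mem (c : word d z) b :
  b \in wseq c -> exists j : 'I_N, c j /\ b = (d + j) %/ d.
Proof.
rewrite /wseq => /mapP[x /mapP[j]]; rewrite mem_filter => /andP[cj _] -> ->.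
by exists j.
Qed.

Lemma mem_wseq (c : word d z) (j : 'I_N) : c j -> (d + j) %/ d \in wseq c.
Proof.
move=> cj; rewrite /wseq; apply/mapP; exists (val j) => //.
by apply/mapP; exists j => //; rewrite mem_filter cj mem_enum.
Qed.

Lemma blockE (j : nat) : (d + j) %/ d = (j %/ d).+1.
Proof. by rewrite divnDl // divnn hd. Qed.

Lemma wseq_le (c : word d z) b : b \in wseq c -> b <= z - 1.
Proof.
move=> /wseq_mem [j [_ ->]]; rewrite blockE.
have h : j %/ d < z - 1.
  by rewrite ltn_divLR // [_ * d]mulnC; exact: ltn_ord.
by [].
Qed.

Lemma wseq_sorted (c : word d z) : sorted leq (wseq c).
Proof.
rewrite /wseq; apply: (homo_sorted (e := leq)).
  by move=> x y hxy; apply: leq_div2r; rewrite leq_add2l.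
apply: (homo_sorted (e := relpre val leq)) => //.
apply: sorted_filter.
  by move=> x y w /= h1 h2; apply: leq_trans h1 h2.
rewrite -sorted_map val_enum_ord.
apply: (sub_sorted (e := ltn)); first by move=> x y; apply: ltnW.
exact: iota_ltn_sorted.
Qed.

Lemma bad_run (c : word d z) L : L < maxgap c ->
  exists a, a + L <= z - 1 /\
     forall j : 'I_N, d * a <= j < d * (a + L) -> c j = false.
Proof.
move=> hL.
have [g hg hgL] : exists2 g, g \in gaps c & L < g.
  apply/hasP; move: hL; apply: contraLR; rewrite -all_predC => /allP H.
  rewrite -leqNgt; apply/bigmax_leqP_seq => i hi _.
  by have := H i hi; rewrite /= -leqNgt.
have hmemz : forall b, b \in 0 :: rcons (wseq c) z -> b <= z.
  move=> b; rewrite inE mem_rcons inE => /orP[/eqP->//|/orP[/eqP->//|hb]].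
  by have := wseq_le hb; lia.
have hs : sorted leq (0 :: rcons (wseq c) z).
  rewrite /= rcons_path; apply/andP; split.
    have := wseq_sorted c; case: (wseq c) => //= a w ->; by rewrite andbT.
  apply: hmemz; have := mem_last 0 (wseq c); rewrite inE => /orP[/eqP->|h].
    by rewrite inE eqxx.
  by rewrite inE mem_rcons inE h !orbT.
have [u [v [hu hv hgE hb]]] := gap_lemma hs hg.
have hvz := hmemz _ hv.
exists u; split; first by lia.
move=> j /andP[h1 h2]; apply/negbTE/negP => cj.
have hw := mem_wseq cj.
have := hb ((d + j) %/ d); rewrite inE mem_rcons inE hw !orbT => /(_ isT).
rewrite blockE.
have e1 : u <= j %/ d by rewrite leq_divRL // [_ * d]mulnC.
have e2 : j %/ d < u + L by rewrite ltn_divLR // [_ * d]mulnC.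
lia.
Qed.

Lemma card_range (lo hi : nat) : lo <= hi <= N ->
  #|[pred j : 'I_N | lo <= j < hi]| = hi - lo.
Proof.
move=> /andP[h1 h2].
rewrite -sum1_card.
rewrite (eq_bigl (fun j : 'I_N => lo <= j < hi)) //.
rewrite -(big_mkord (fun i => lo <= i < hi) (fun _ => 1)).
rewrite (big_cat_nat (n := lo)) //=; last by apply: leq_trans h2.
rewrite (big_cat_nat (n := hi) (m := lo)) //=.
have EA : \sum_(0 <= i < lo | lo <= i < hi) 1 = 0.
  by rewrite big_nat_cond big1 // => i /andP[H1 H2]; lia.
have EC : \sum_(hi <= i < N | lo <= i < hi) 1 = 0.
  by rewrite big_nat_cond big1 // => i /andP[H1 H2]; lia.
rewrite EA EC big_nat_cond (eq_bigl (fun i => (lo <= i < hi) && true)); last first.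
  by move=> i; rewrite andbb andbT.
rewrite -big_nat_cond sum_nat_const_nat; lia.
Qed.

Definition Sa L a : {set word d z} :=
  [set c : word d z | (a + L <= z - 1) &&
      [forall j : 'I_N, (d * a <= j < d * (a + L)) ==> ~~ c j]].

Lemma card_Sa L a : #|Sa L a| * 2 ^ (d * L) <= 2 ^ N.
Proof.
case: (boolP (a + L <= z - 1)) => haL; last first.
  rewrite (_ : Sa L a = set0) ?cards0 //.
  by apply/setP => c; rewrite !inE (negbTE haL).
pose P := [pred j : 'I_N | d * a <= j < d * (a + L)].
pose F := fun j : 'I_N => if P j then pred1 false else [pred b : bool | true].
have -> : #|Sa L a| = #|family F|.
  apply: eq_card => c; rewrite inE haL /=.
  apply/forallP/familyP => H j; have := H j; rewrite /F /=;
    case: (d * a <= j < d * (a + L)) => //=.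
  by move=> /negbTE->.
  by rewrite inE => /eqP->.
rewrite card_family foldrE big_map big_enum /=.
rewrite (eq_bigr (fun j => if P j then 1 else 2)); last first.
  move=> j _; rewrite /F; case: (P j) => //; [exact: card1 | exact: card_bool].
have -> : \prod_(i in 'I_N) (if P i then 1 else 2) = \prod_(i in [predC P]) 2.
  rewrite big_mkcond [RHS]big_mkcond; apply: eq_bigr => i _; rewrite !inE.
  by case: (_ <= _ < _).
rewrite (prod_nat_const [predC P]).
have hP : #|P| = d * L.
  rewrite card_range; first by lia.
  apply/andP; split; first by lia.
  by rewrite leq_pmul2l.
have := cardC P; rewrite hP card_ord => hC.
rewrite -expnD; apply: leq_pexp2l => //.
by rewrite addnC hC.
Qed.

Lemma card_bad L : #|[set c : word d z | L < maxgap c]| * 2 ^ (d * L) <= z * 2 ^ N.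
Proof.
apply: (@leq_trans ((\sum_(a < z) #|Sa L a|) * 2 ^ (d * L))).
  rewrite leq_mul2r; apply/orP; right.
  rewrite -sum1_card.
  apply: (@leq_trans (\sum_(c in [set c : word d z | L < maxgap c])
                          \sum_(a < z) (c \in Sa L a : nat))).
    apply: leq_sum => c; rewrite inE => /bad_run [a [haL hj]].
    have haz : a < z by lia.
    rewrite (bigD1 (Ordinal haz)) //= (_ : c \in Sa L a = true) //.
    rewrite inE haL /=; apply/forallP => j; apply/implyP => /hj ->; done.
  apply: (@leq_trans (\sum_c \sum_(a < z) (c \in Sa L a : nat))).
    rewrite [X in _ <= X](bigID (fun c => c \in [set c : word d z | L < maxgap c])) /=.
    exact: leq_addr.
  rewrite exchange_big /=; apply: leq_sum => a _.
  rewrite -sum1_card [X in _ <= X]big_mkcond; apply: eq_leq; apply: eq_bigr => c _; by case: (c \in Sa L a).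
rewrite big_distrl /=.
apply: (@leq_trans (\sum_(a < z) 2 ^ N)).
  by apply: leq_sum => a _; apply: card_Sa.
by rewrite sum_nat_const card_ord.
Qed.
End S.

From Stdlib Require Import Reals Lra.

Lemma real_part (V B P zR d lg L : R) :
  (0 < P)%R -> (1 < zR)%R -> (0 <= d)%R -> (lg * lg <= L)%R ->
  (V + B = P)%R ->
  (B * exp (d * L * ln 2) <= zR * P)%R ->
  lg = (ln zR / ln 2)%R ->
  (V >= P * (1 - 2 * exp ((1 - d * lg) * ln zR)))%R.
Proof.
move=> hP hz hd hL hVB hB hlg.
have l2 : (0 < ln 2)%R by have := ln_lt_2; lra.
have lz : (0 < ln zR)%R by rewrite -ln_1; apply: ln_increasing; lra.
have e1 : ln zR = (lg * ln 2)%R by rewrite hlg; field; lra.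
have k1 : (d * lg * ln zR <= d * L * ln 2)%R.
  rewrite e1; have : (0 <= d * ln 2)%R by nra. nra.
have k2 : (exp (d * lg * ln zR) <= exp (d * L * ln 2))%R.
  case: (Rle_lt_or_eq_dec _ _ k1) => h; last by rewrite h; lra.
  by apply: Rlt_le; apply: exp_increasing.
set E := exp ((1 - d * lg) * ln zR).
have k3 : (E * exp (d * lg * ln zR) = zR)%R.
  rewrite /E -exp_plus -{3}(exp_ln zR); last lra.
  by f_equal; ring.
have hE : (0 < E)%R by apply: exp_pos.
have hX := exp_pos (d * L * ln 2).
have k4 : (B * exp (d * L * ln 2) <= P * E * exp (d * L * ln 2))%R.
  apply: Rle_trans hB _.
  rewrite -k3.
  have : (0 <= P * E)%R by nra.
  nra.
have k5 : (B <= P * E)%R.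
  by apply: (Rmult_le_reg_r (exp (d * L * ln 2))).
have : (0 <= P * E)%R by nra.
lra.
Qed.

Lemma INR_expn2 n : INR (expn 2 n) = (2 ^ n)%R.
Proof.
elim: n => [|n IH]; first by [].
rewrite expnS -multE mult_INR IH /=; lra.
Qed.

Theorem mainTheorem11 (d z : nat) (hd : (1 <= d)%N) (hz : (2 <= z)%N) :
  (INR #|Vset d z| >=
   2 ^ (d * (z - 1))%nat * (1 - 2 * Rpower (INR z) (1 - INR d * log2 (INR z))))%R.
Proof.
set x := (log2 (INR z) ^ 2)%R.
have hx0 : (0 <= x)%R by apply: pow2_ge_0.
have hceil : (x <= IZR (Rceil x))%R.
  rewrite /Rceil opp_IZR; have := base_Int_part (- x); lra.
have hLz : (0 <= Rceil x)%Z by apply: le_IZR; lra.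
pose L := Z.to_nat (Rceil x).
have eL : Z.of_nat L = Rceil x by rewrite /L Znat.Z2Nat.id.
have hLL : INR L = IZR (Rceil x) by rewrite INR_IZR_INZ eL.
have hbad : ~: Vset d z = [set c | (L < maxgap c)%N].
  apply/setP => c; rewrite !inE.
  case: Z.leb_spec0 => h /=; rewrite -/x in h; apply/esym.
    by apply/negbTE; rewrite -leqNgt; apply/leP; lia.
  by apply/ltP; lia.
have hz0 : (0 < z)%N by apply: leq_trans hz.
have hsum : (#|Vset d z| + #|[set c : word d z | (L < maxgap c)%N]| = expn 2 (d * (z - 1)))%N.
  by rewrite -hbad cardsC /word card_ffun card_bool card_ord.
have hcb := card_bad hd hz0 L.
rewrite /Rpower.
apply: (real_part (B := INR #|[set c : word d z | (L < maxgap c)%N]|) (L := INR L)).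
- by apply: pow_lt; lra.
- by apply: (lt_INR 1); apply/ltP.
- exact: pos_INR.
- by rewrite hLL; move: hceil; rewrite /x /=; lra.
- by rewrite -INR_expn2 -hsum -plus_INR.
- rewrite -mult_INR -/(Rpower 2 _) Rpower_pow; last lra.
  rewrite -INR_expn2 -mult_INR -INR_expn2 -!mult_INR.
  by apply: le_INR; apply/leP.
- by [].
Qed.
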